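(* Let $S\subseteq S_n$ be a sharply transitive set of permutations and let $L$ be the latin square whose rows are the permutations in $S$ (row corresponding to $\sigma\in S$ having entry $\sigma(i)$ in column $i$). Then $\mathrm{cr}(S)\le n-1$, with equality if and only if $L$ has a transversal.
   Context: $S_n$ is the symmetric group on $\{1,\dots,n\}$ with the Hamming distance: the distance between $g,h\in S_n$ is the number of points $i$ with $g(i)\ne h(i)$. The covering radius $\mathrm{cr}(P)$ of a nonempty $P\subseteq S_n$ is the smallest $r$ such that every permutation in $S_n$ is at distance at most $r$ from some element of $P$. A set $S\subseteq S_n$ is sharply transitive if for all $i,j\in\{1,\dots,n\}$ there is exactly one $\sigma\in S$ with $\sigma(i)=j$; its permutations then form the rows of a latin square of order $n$. A transversal of a latin square of order $n$ is a set of $n$ cells, one from each row and one from each column, no two containing the same symbol. *)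

(* Defs.v *)
From mathcomp Require Import all_boot all_fingroup.
Set Implicit Arguments. Unset Strict Implicit. Unset Printing Implicit Defensive.

Definition hdist (n : nat) (g h : 'S_n) : nat := #|[set i | g i != h i]|.

Definition covers (n : nat) (P : {set 'S_n}) (r : nat) : bool :=
  [forall g : 'S_n, [exists h in P, hdist g h <= r]].

(* Covering radius: the smallest r such that P covers S_n with radius r.
   Every r >= n works for nonempty P (hdist <= n), so searching 0..n suffices;
   for empty P the value is meaningless (n.+1). *)
Definition cr (n : nat) (P : {set 'S_n}) : nat :=
  find (covers P) (iota 0 n.+1).

Definition sharply_transitive (n : nat) (S : {set 'S_n}) : Prop :=
  forall i j : 'I_n, #|[set s in S | s i == j]| = 1.

(* The latin square L with rows indexed by sigma in S and columns by i;
   a cell is a pair (sigma, i) with entry sigma(i). *)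
Definition ls_entry (n : nat) (c : 'S_n * 'I_n) : 'I_n := c.1 c.2.

Definition is_transversal (n : nat) (S : {set 'S_n}) (T : {set 'S_n * 'I_n}) : Prop :=
  [/\ T \subset setX S [set: 'I_n],
      #|T| = n,
      (forall s, s \in S -> #|[set c in T | c.1 == s]| = 1),
      (forall i : 'I_n, #|[set c in T | c.2 == i]| = 1) &
      {in T &, forall c d, ls_entry c = ls_entry d -> c = d}].

Definition has_transversal (n : nat) (S : {set 'S_n}) : Prop :=
  exists T : {set 'S_n * 'I_n}, is_transversal S T.

(* Main.v *)
Require Import Defs.
From mathcomp Require Import all_boot all_fingroup.
Set Implicit Arguments. Unset Strict Implicit. Unset Printing Implicit Defensive.

Definition agree n (g s : 'S_n) := #|[set i | g i == s i]|.

Lemma hdist_agree n (g s : 'S_n) : hdist g s + agree g s = n.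
Proof.
rewrite /hdist /agree addnC.
have -> : [set i | g i != s i] = ~: [set i | g i == s i].
  by apply/setP=> i; rewrite !inE.
by rewrite cardsC card_ord.
Qed.

Lemma cr_le n (S : {set 'S_n}) k : k <= n -> covers S k -> cr S <= k.
Proof.
move=> kn ck; rewrite leqNgt; apply/negP=> lt.
have := before_find 0 lt; rewrite nth_iota ?add0n ?ck //.
Qed.

Lemma cr_spec n (S : {set 'S_n}) : cr S <= n -> covers S (cr S).
Proof.
move=> le; have hs : has (covers S) (iota 0 n.+1).
  by rewrite has_find size_iota ltnS.
by have := nth_find 0 hs; rewrite nth_iota ?add0n // size_iota ltnS.
Qed.

Lemma covers_mono n (S : {set 'S_n}) a b : a <= b -> covers S a -> covers S b.
Proof.
move=> ab /forallP H; apply/forallP=> g; have /existsP[h /andP[hS hd]] := H g.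
by apply/existsP; exists h; rewrite hS (leq_trans hd ab).
Qed.

Lemma fiber1 n (S : {set 'S_n}) (hS : sharply_transitive S) i s t :
  s \in S -> t \in S -> s i = t i -> s = t.
Proof.
move=> sS tS e; have := hS i (s i); move/eqP/cards1P=> [u Hu].
have : s \in [set s0 in S | s0 i == s i] by rewrite inE sS eqxx.
have : t \in [set s0 in S | s0 i == s i] by rewrite inE tS e eqxx.
by rewrite Hu !inE => /eqP-> /eqP->.
Qed.

Lemma sum_agree n (S : {set 'S_n}) (hS : sharply_transitive S) g :
  \sum_(s in S) agree g s = n.
Proof.
rewrite /agree.
under eq_bigr => s _ do rewrite -sum1dep_card big_mkcond.
rewrite exchange_big /=.
rewrite -[n in _ = n]card_ord -sum1_card.
apply: eq_bigr => i _.
rewrite -big_mkcondr /= sum1dep_card -(hS i (g i)).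
by apply: eq_card => s; rewrite !inE eq_sym.
Qed.

Lemma exists_agree n (S : {set 'S_n}) (hS : sharply_transitive S) g :
  0 < n -> exists2 s, s \in S & 0 < agree g s.
Proof.
move=> n0; apply/exists_inP; case: (boolP [exists s in S, 0 < agree g s]) => // /exists_inPn H.
have : \sum_(s in S) agree g s = 0.
  by apply: big1 => s /H; rewrite lt0n negbK => /eqP.
by rewrite sum_agree // => n0'; rewrite n0' in n0.
Qed.

Lemma covers_pred n (S : {set 'S_n}) (hS : sharply_transitive S) :
  0 < n -> covers S n.-1.
Proof.
move=> n0; apply/forallP=> g; have [s sS a] := exists_agree hS g n0.
apply/existsP; exists s; rewrite sS /=.
have e := hdist_agree g s; move: (hdist g s) (agree g s) e a => h b <- b0.
by rewrite -subn1 -addnBA // leq_addr.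
Qed.

Lemma card_S n (S : {set 'S_n}) (hS : sharply_transitive S) (i0 : 'I_n) :
  #|S| <= n.
Proof.
rewrite -(card_in_imset (f := fun s : 'S_n => s i0)).
  by rewrite -[n in _ <= n]card_ord max_card.
by move=> s t sS tS /= e; apply: (fiber1 hS sS tS e).
Qed.

Lemma agree1 n (S : {set 'S_n}) (hS : sharply_transitive S) g : 0 < n ->
  (forall s, s \in S -> agree g s <= 1) -> forall s, s \in S -> agree g s = 1.
Proof.
move=> n0 H s0 s0S; apply/eqP; rewrite eqn_leq H //= lt0n; apply/negP => /eqP a0.
have := sum_agree hS g; rewrite (bigD1 s0) //= a0 add0n => e.
have : \sum_(s in S | s != s0) agree g s <= \sum_(s in S | s != s0) 1.
  by apply: leq_sum => s /andP[sS _]; apply: H.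
rewrite e sum1_card.
have := card_S hS (Ordinal n0); rewrite (cardD1 s0) s0S add1n.
move=> h1 h2.
suff E : #|[predD1 S & s0]| = #|(fun i : 'S_n => (i \in S) && (i != s0))|.
  by rewrite E in h1; have := leq_ltn_trans h2 h1; rewrite ltnn.
by apply: eq_card => s; rewrite !inE andbC.
Qed.

Lemma tr_of_g n (S : {set 'S_n}) (hS : sharply_transitive S) g : 0 < n ->
  (forall s, s \in S -> agree g s <= 1) -> has_transversal S.
Proof.
move=> n0 H; have A1 := agree1 hS n0 H.
pose T := [set c : 'S_n * 'I_n | (c.1 \in S) && (c.1 c.2 == g c.2)].
have col i : #|[set c in T | c.2 == i]| = 1.
  rewrite -(hS i (g i)).
  have -> : [set c in T | c.2 == i] = (fun s => (s, i)) @: [set s in S | s i == g i].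
    apply/setP => [[s j]]; rewrite !inE /=; apply/idP/imsetP.
      by case/andP => /andP[sS e] /eqP ji; subst j; exists s; rewrite // inE sS e.
    by case=> t; rewrite inE => /andP[tS e] [-> ->]; rewrite tS e eqxx.
  by apply: card_imset => s t [].
exists T; split.
- by apply/subsetP => [[s j]]; rewrite !inE /= andbT => /andP[].
- rewrite -sum1_card (partition_big (fun c => c.2) predT) //=.
  rewrite -[n in _ = n]card_ord -sum1_card; apply: eq_bigr => i _.
  by rewrite sum1dep_card -(col i); apply: eq_card => c; rewrite !inE.
- move=> s sS; rewrite -(A1 s sS) /agree.
  have -> : [set c in T | c.1 == s] = (fun i => (s, i)) @: [set i | g i == s i].
    apply/setP => [[t j]]; rewrite !inE /=; apply/idP/imsetP.
      by case/andP => /andP[tS e] /eqP ts; subst t; exists j; rewrite // inE eq_sym.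
    by case=> k; rewrite inE => e [-> ->]; rewrite sS eq_sym e eqxx.
  by apply: card_imset => i j [].
- exact: col.
- move=> [s i] [t j]; rewrite !inE /= /ls_entry /= => /andP[sS /eqP es] /andP[tS /eqP et] e.
  have ij : i = j by apply: (perm_inj (s := g)); rewrite -es -et.
  subst j; congr (_, _); apply: (fiber1 hS sS tS e).
Qed.

Lemma g_of_tr n (S : {set 'S_n}) (hS : sharply_transitive S) :
  has_transversal S -> exists g, forall s, s \in S -> agree g s <= 1.
Proof.
move=> [T [sub cT row col inj]].
pose cl (i : 'I_n) := odflt ((1%g : {perm 'I_n}), i) [pick c in T | c.2 == i].
have clP i : cl i \in T /\ (cl i).2 = i.
  rewrite /cl; case: pickP => [c /andP[cT' /eqP e] | H] //=.
  have := col i; move/eqP/cards1P => [c Hc].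
  have : c \in [set c in T | c.2 == i] by rewrite Hc set11.
  by rewrite inE H.
have clI : injective cl.
  by move=> i j e; rewrite -(clP i).2 e (clP j).2.
pose gf i := ls_entry (cl i).
have gI : injective gf.
  move=> i j e; apply: clI; apply: inj => //; [exact: (clP i).1 | exact: (clP j).1].
exists (perm gI) => s sS.
rewrite /agree -(row s sS).
rewrite -(card_imset _ clI); apply: subset_leq_card; apply/subsetP => c.
case/imsetP => i; rewrite inE permE /gf /ls_entry => /eqP e ->.
have [cT' c2] := clP i.
have c1S : (cl i).1 \in S by have := subsetP sub _ cT'; rewrite inE => /andP[].
rewrite inE cT' /=; apply/eqP; apply: (fiber1 hS c1S sS (i := i)); by rewrite c2 in e.
Qed.

Lemma agree_le1 n (g s : 'S_n) : (agree g s <= 1) = (n.-1 <= hdist g s).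
Proof.
have e := hdist_agree g s; move: (hdist g s) (agree g s) e => h a <-.
case: a => [|[|a]]; rewrite ?addn0 ?addn1 /= ?leq_pred //.
  by rewrite (leqnn h).
by rewrite (addnS h) /= (addnS h) (ltnNge (h+a) h) leq_addr.
Qed.

Theorem theorem6p2 (n : nat) (n_gt0 : 0 < n) (S : {set 'S_n})
  (hS : sharply_transitive S) :
  cr S <= n.-1 /\ (cr S = n.-1 <-> has_transversal S).
Proof.
have le : cr S <= n.-1 by apply: cr_le; [exact: leq_pred | exact: covers_pred].
split => //; split.
- move=> E; suff [g Hg] : exists g, forall s, s \in S -> agree g s <= 1.
    exact: (tr_of_g hS n_gt0 Hg).
  case: n n_gt0 S hS le E => // [[|n]] _ S hS le E.
    by exists 1%g => s _; rewrite /agree; apply: leq_trans (max_card _) _; rewrite card_ord.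
  case: (boolP (covers S n)) => [C | /forallPn [g /exists_inPn H]].
    by have := cr_le (leqW (leqnSn n)) C; rewrite E /= ltnn.
  by exists g => s sS; rewrite agree_le1 /=; have := H s sS; rewrite -ltnNge.
- case/(g_of_tr hS) => g H; apply/eqP; rewrite eqn_leq le /= leqNgt; apply/negP => lt.
  have := cr_spec (leq_trans le (leq_pred n)); move/forallP/(_ g)/exists_inP => [s sS hd].
  have := H s sS; rewrite agree_le1 => h2.
  by have := leq_ltn_trans (leq_trans h2 hd) lt; rewrite ltnn.
Qed.
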